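(* Let $F$ be a number field and $R$ an order in $F$. Let $G$ be a finite group, $H$ a finite subgroup of $\mathcal{V}(RG)$, and $x\in RG$. (i) The shifted bicyclic maps $\psi_{H,x}$ and $\psi_{x,H}$ are injective group morphisms $H\to\mathcal{U}(RG)$. (ii) The subgroups $H$, $\psi_{H,x}(H)$ and $\psi_{x,H}(H)$ are conjugate in $\mathcal{U}(FG)$. (iii) If moreover $H\le G$ and $g\in G$, then $\psi_{H,g}$ and $\psi_{g^{-1},H}$ restrict to the identity on $H\cap H^g$, and $\psi_{H,g}(H)\cap\psi_{g^{-1},H}(H)=H\cap H^g$.
   Context: $\mathcal{V}(RG)$ is the group of units of $RG$ of augmentation $1$. For a finite subgroup $H$ put $\widetilde{H}=\sum_{h\in H}h$. The shifted bicyclic maps are $\psi_{H,x}:H\to\mathcal{U}(RG)$, $h\mapsto h+\widetilde{H}x(1-h)$, and $\psi_{x,H}:H\to\mathcal{U}(RG)$, $h\mapsto h+(1-h)x\widetilde{H}$. $H^g=g^{-1}Hg$. *)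

(* Defs.v *)
From HB Require Import structures.
From mathcomp Require Import all_boot all_order all_algebra all_fingroup all_field.
Set Implicit Arguments. Unset Strict Implicit. Unset Printing Implicit Defensive.
Import GRing.Theory.
Local Open Scope ring_scope.

Section GroupAlgebra.
Variables (F : fieldType) (gT : finGroupType).

Definition galg : predArgType := {ffun gT -> F}.
HB.instance Definition _ := GRing.Zmodule.on galg.

Definition galg_mul (a b : galg) : galg :=
  [ffun g => \sum_(h : gT) a h * b (h^-1 * g)%g].
Definition galg_one : galg := [ffun g => (g == 1%g)%:R].

Lemma galg_mulA : associative galg_mul.
Proof.
move=> a b c; apply/ffunP=> g; rewrite !ffunE; symmetry.
under eq_bigr do rewrite ffunE big_distrl /=.
rewrite exchange_big /=; apply: eq_bigr => h _.
rewrite ffunE big_distrr /= (reindex_inj (mulgI h)) /=.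
by apply: eq_bigr => m _; rewrite mulKg mulrA invMg mulgA.
Qed.

Lemma galg_mul1 : left_id galg_one galg_mul.
Proof.
move=> a; apply/ffunP=> g; rewrite !ffunE (bigD1 1%g) //= big1.
  by rewrite ffunE eqxx mul1r invg1 mul1g addr0.
by move=> h /negbTE nh; rewrite ffunE nh mul0r.
Qed.

Lemma galg_mul1r : right_id galg_one galg_mul.
Proof.
move=> a; apply/ffunP=> g; rewrite !ffunE (bigD1 g) //= big1.
  by rewrite ffunE mulVg eqxx mulr1 addr0.
move=> h nh; rewrite ffunE -eq_mulVg1 (negbTE nh) mulr0 //.
Qed.

Lemma galg_mulDl : left_distributive galg_mul +%R.
Proof.
move=> a b c; apply/ffunP=> g; rewrite !ffunE -big_split /=.
by apply: eq_bigr => h _; rewrite ffunE mulrDl.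
Qed.

Lemma galg_mulDr : right_distributive galg_mul +%R.
Proof.
move=> a b c; apply/ffunP=> g; rewrite !ffunE -big_split /=.
by apply: eq_bigr => h _; rewrite ffunE mulrDr.
Qed.

Lemma galg_one_neq0 : galg_one != 0.
Proof.
apply/eqP => /ffunP /(_ 1%g); rewrite !ffunE eqxx => /eqP.
by rewrite oner_eq0.
Qed.

HB.instance Definition _ := GRing.Zmodule_isNzRing.Build galg
  galg_mulA galg_mul1 galg_mul1r galg_mulDl galg_mulDr galg_one_neq0.

End GroupAlgebra.

Section GroupAlgebraNotions.
Variables (F : fieldType) (gT : finGroupType).
Local Notation FG := (galg F gT).

Definition gelt (g : gT) : FG := [ffun k => (k == g)%:R].

Definition augm (u : FG) : F := \sum_(g : gT) u g.

(* R G, for a subring R of F, as the subset of F G with coefficients in R *)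
Definition in_galg (R : pred F) : pred FG := fun u : FG => [forall g, u g \in R].

Definition unit_in (S : pred FG) (u : FG) : Prop :=
  u \in S /\ exists2 v, v \in S & u * v = 1 /\ v * u = 1.

Definition V_galg (R : pred F) (u : FG) : Prop :=
  unit_in (in_galg R) u /\ augm u = 1.

(* H (given as a duplicate-free list) is a finite subgroup of the group of
   elements satisfying P *)
Definition is_finite_subgroup (P : FG -> Prop) (H : seq FG) : Prop :=
  [/\ uniq H, {in H, forall h, P h}, 1 \in H,
      {in H &, forall h k, h * k \in H} &
      {in H, forall h, exists2 k, k \in H & h * k = 1 /\ k * h = 1}].

Definition tilde (H : seq FG) : FG := \sum_(h <- H) h.

Definition psiHx (H : seq FG) (x : FG) (h : FG) : FG := h + tilde H * x * (1 - h).
Definition psixH (x : FG) (H : seq FG) (h : FG) : FG := h + (1 - h) * x * tilde H.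

(* B = A^u = u^-1 A u for some u satisfying P (v is the inverse of u) *)
Definition conjugate_in (P : FG -> Prop) (A B : seq FG) : Prop :=
  exists u v, [/\ P u, u * v = 1, v * u = 1 & B =i [seq v * a * u | a <- A]].

End GroupAlgebraNotions.

(* R is an order of the number field F: a subring of F which is a finitely
   generated Z-module spanning F over Q. *)
Definition is_order (F : fieldExtType rat) (R : pred F) : Prop :=
  [/\ 1 \in R, {in R &, forall x y, x - y \in R},
      {in R &, forall x y, x * y \in R} &
      exists s : seq F,
        (forall x, x \in R <-> exists c : 'I_(size s) -> int,
                                 x = \sum_(i < size s) s`_i *~ c i)
        /\ (<<s>>%VS = fullv)].

(* Main.v *)
Require Import Defs.
From HB Require Import structures.
From mathcomp Require Import all_boot all_order all_algebra all_fingroup all_field.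
Set Implicit Arguments. Unset Strict Implicit. Unset Printing Implicit Defensive.
Import GRing.Theory.
Local Open Scope ring_scope.

Lemma natF_neq0 (F : fieldExtType rat) (n : nat) : (0 < n)%N -> (n%:R : F) != 0.
Proof.
move=> n0; rewrite -(rmorph_nat (in_alg F)) fmorph_eq0 Num.Theory.pnatr_eq0 -lt0n //.
Qed.

Lemma char0_galg (F : fieldExtType rat) (gT : finGroupType) (z : galg F gT) n :
  (0 < n)%N -> z *+ n = 0 -> z = 0.
Proof.
move=> n0 zn; apply/ffunP => g; move/ffunP: zn => /(_ g).
rewrite ffunMnE !ffunE -mulr_natr => /eqP; rewrite mulf_eq0 (negbTE (natF_neq0 F n0)) orbF.
by move/eqP.
Qed.

Lemma sum_const_seq (T : nmodType) (I : Type) (r : seq I) (c : T) :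
  \sum_(i <- r) c = c *+ size r.
Proof. by elim: r => [|a r IH]; rewrite ?big_nil ?big_cons ?IH ?mulrS. Qed.


Lemma sub_inv (F : fieldExtType rat) (gT : finGroupType) P (H : seq (galg F gT)) m :
  is_finite_subgroup P H -> m \in H -> exists2 k, k \in H & m * k = 1 /\ k * m = 1.
Proof. by case=> _ _ _ _ Hinv /Hinv. Qed.

Lemma tilde_mulr (F : fieldExtType rat) (gT : finGroupType) P (H : seq (galg F gT)) m :
  is_finite_subgroup P H -> m \in H -> tilde H * m = tilde H.
Proof.
move=> S mH; have [uH _ _ HM _] := S.
have [k kH [mk km]] := sub_inv S mH.
have inj : injective (fun h => h * m).
  by move=> a b /= E; rewrite -[a]mulr1 -mk mulrA E -mulrA mk mulr1.
have u2 : uniq [seq h * m | h <- H] by rewrite map_inj_uniq.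
have sub : {subset [seq h * m | h <- H] <= H}.
  by move=> y /mapP [h hH ->]; apply: HM.
have sz : (size H <= size [seq (h * m)%R | h <- H])%N by rewrite size_map.
have [_ eqs] := uniq_min_size u2 sub sz.
rewrite /tilde mulr_suml -(big_map (fun h => h * m) xpredT id).
by apply: perm_big; apply: uniq_perm.
Qed.

Lemma tilde_mull (F : fieldExtType rat) (gT : finGroupType) P (H : seq (galg F gT)) m :
  is_finite_subgroup P H -> m \in H -> m * tilde H = tilde H.
Proof.
move=> S mH; have [uH _ _ HM _] := S.
have [k kH [mk km]] := sub_inv S mH.
have inj : injective (fun h => m * h).
  by move=> a b /= E; rewrite -[a]mul1r -km -mulrA E mulrA km mul1r.
have u2 : uniq [seq m * h | h <- H] by rewrite map_inj_uniq.
have sub : {subset [seq m * h | h <- H] <= H}.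
  by move=> y /mapP [h hH ->]; apply: HM.
have sz : (size H <= size [seq (m * h)%R | h <- H])%N by rewrite size_map.
have [_ eqs] := uniq_min_size u2 sub sz.
rewrite /tilde mulr_sumr -(big_map (fun h => m * h) xpredT id).
by apply: perm_big; apply: uniq_perm.
Qed.

Lemma tilde_sq (F : fieldExtType rat) (gT : finGroupType) P (H : seq (galg F gT)) :
  is_finite_subgroup P H -> tilde H * tilde H = tilde H *+ size H.
Proof.
move=> S; rewrite {1}/tilde mulr_suml (eq_big_seq (fun=> tilde H)).
  by rewrite sum_const_seq.
by move=> h hH; rewrite (tilde_mull S hH).
Qed.

Lemma psiHx_mul (F : fieldExtType rat) (gT : finGroupType) (H : seq (galg F gT)) x h k :
  h * tilde H = tilde H -> psiHx H x (h * k) = psiHx H x h * psiHx H x k.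
Proof.
move=> ht; rewrite /psiHx; set t := tilde H; set a := t * x.
have ha : h * a = a by rewrite /a mulrA ht.
have E1 : h * (k + a * (1 - k)) = h * k + a * (1 - k) by rewrite mulrDr mulrA ha.
have E2 : (1 - h) * (k + a * (1 - k)) = (1 - h) * k.
  by rewrite mulrDr [(1 - h) * (a * _)]mulrA [(1 - h) * a]mulrBl mul1r ha subrr mul0r addr0.
rewrite mulrDl E1 -mulrA E2 -addrA -mulrDr; congr (_ + _ * _).
by rewrite mulrBl mul1r addrA subrK.
Qed.

Lemma psixH_mul (F : fieldExtType rat) (gT : finGroupType) (H : seq (galg F gT)) x h k :
  tilde H * k = tilde H -> psixH x H (h * k) = psixH x H h * psixH x H k.
Proof.
move=> tk; rewrite /psixH; set t := tilde H in tk *.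
have E1 : (h + (1 - h) * x * t) * k = h * k + (1 - h) * x * t.
  by rewrite mulrDl -[(1 - h) * x * t * k]mulrA tk.
have E2 : (h + (1 - h) * x * t) * ((1 - k) * x * t) = (h * (1 - k)) * x * t.
  rewrite !mulrA; congr (_ * _ * _).
  by rewrite mulrDl -[(1 - h) * x * t * (1 - k)]mulrA [t * (1 - k)]mulrBr mulr1 tk subrr mulr0 addr0.
rewrite mulrDr E1 E2 -addrA -!mulrDl; congr (_ + _ * _ * _).
by rewrite mulrBr mulr1 addrA subrK.
Qed.

Lemma psiHx1 (F : fieldExtType rat) (gT : finGroupType) (H : seq (galg F gT)) x :
  psiHx H x 1 = 1.
Proof. by rewrite /psiHx subrr mulr0 addr0. Qed.

Lemma psixH1 (F : fieldExtType rat) (gT : finGroupType) (H : seq (galg F gT)) x :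
  psixH x H 1 = 1.
Proof. by rewrite /psixH subrr !mul0r addr0. Qed.

Lemma psiHx_tr (F : fieldExtType rat) (gT : finGroupType) (H : seq (galg F gT)) x h :
  h * tilde H = tilde H -> tilde H * h = tilde H -> psiHx H x h * tilde H = tilde H.
Proof.
move=> ht th; rewrite /psiHx mulrDl ht -!mulrA mulrBl mul1r ht subrr !mulr0 addr0 //.
Qed.

Lemma psiHx_tl (F : fieldExtType rat) (gT : finGroupType) (H : seq (galg F gT)) x h :
  tilde H * h = tilde H -> tilde H * tilde H = tilde H *+ size H ->
  tilde H * psiHx H x h = tilde H + (tilde H * x * (1 - h)) *+ size H.
Proof.
move=> th tt; rewrite /psiHx mulrDr th !mulrA tt !mulrnAl //.
Qed.

Lemma psixH_tl (F : fieldExtType rat) (gT : finGroupType) (H : seq (galg F gT)) x h :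
  h * tilde H = tilde H -> tilde H * h = tilde H -> tilde H * psixH x H h = tilde H.
Proof.
move=> ht th; rewrite /psixH mulrDr th !mulrA mulrBr mulr1 th subrr !mul0r addr0 //.
Qed.

Lemma psixH_tr (F : fieldExtType rat) (gT : finGroupType) (H : seq (galg F gT)) x h :
  h * tilde H = tilde H -> tilde H * tilde H = tilde H *+ size H ->
  psixH x H h * tilde H = tilde H + ((1 - h) * x * tilde H) *+ size H.
Proof.
move=> ht tt; rewrite /psixH mulrDl ht -!mulrA tt !mulrnAr //.
Qed.

Lemma unip_one (F : fieldExtType rat) (gT : finGroupType) P (H : seq (galg F gT)) u :
  is_finite_subgroup P H -> u \in H -> u * (1 - u) = 1 - u -> u = 1.
Proof.
move=> S uH uf; have [uniqH _ oneH HM _] := S.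
set f := 1 - u in uf.
have uE : u = 1 - f by rewrite /f opprB addrC subrK.
clearbody f.
have pw : forall m, u ^+ m = 1 - f *+ m.
  elim=> [|m IH].
    by rewrite expr0 mulr0n subr0.
  by rewrite exprS IH mulrBr mulr1 mulrnAr uf {1}uE mulrS opprD addrA.
have pH : forall m, u ^+ m \in H.
  elim=> [|m IH].
    by rewrite expr0.
  by rewrite exprS; apply: HM.
case: (eqVneq f 0) => [f0|fn0]; first by rewrite uE f0 subr0.
have inj : {in iota 0 (size H).+1 &, injective (fun m => u ^+ m)}.
  move=> i j _ _ /=; rewrite !pw => /addrI /oppr_inj E.
  case: (ltngtP i j) => [lt|lt|//].
  - have : f *+ (j - i) = 0.
      by apply: (@addrI _ (f *+ i)); rewrite -mulrnDr subnKC ?(ltnW lt) // -E addr0.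
    by move/(char0_galg (_ : (0 < j - i)%N)); rewrite subn_gt0 lt => /(_ isT) /eqP; rewrite (negbTE fn0).
  - have : f *+ (i - j) = 0.
      by apply: (@addrI _ (f *+ j)); rewrite -mulrnDr subnKC ?(ltnW lt) // E addr0.
    by move/(char0_galg (_ : (0 < i - j)%N)); rewrite subn_gt0 lt => /(_ isT) /eqP; rewrite (negbTE fn0).
have : (size [seq u ^+ m | m <- iota 0 (size H).+1] <= size H)%N.
  apply: uniq_leq_size; first by rewrite (map_inj_in_uniq inj) iota_uniq.
  by move=> y /mapP [m _ ->].
by rewrite size_map size_iota ltnn.
Qed.

Lemma psiHx_inj (F : fieldExtType rat) (gT : finGroupType) P (H : seq (galg F gT)) x :
  is_finite_subgroup P H -> {in H &, injective (psiHx H x)}.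
Proof.
move=> S h k hH kH E.
have [uniqH _ oneH HM _] := S.
have [k' k'H [kk' k'k]] := sub_inv S kH.
have ht m : m \in H -> m * tilde H = tilde H := tilde_mull S.
have uH : h * k' \in H := HM _ _ hH k'H.
set u := h * k' in uH *.
have Eu : psiHx H x u = 1.
  by rewrite /u psiHx_mul ?ht // E -psiHx_mul ?ht // kk' psiHx1.
have uf : u * (1 - u) = 1 - u.
  have E2 : tilde H * x * (1 - u) = 1 - u by rewrite -{2}Eu /psiHx [u + _]addrC addrK.
  by rewrite -{1}E2 !mulrA (ht u uH) E2.
have u1 := unip_one S uH uf.
by rewrite -[h]mulr1 -k'k mulrA -/u u1 mul1r.
Qed.

Lemma psixH_inj (F : fieldExtType rat) (gT : finGroupType) P (H : seq (galg F gT)) x :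
  is_finite_subgroup P H -> {in H &, injective (psixH x H)}.
Proof.
move=> S h k hH kH E.
have [uniqH _ oneH HM _] := S.
have [k' k'H [kk' k'k]] := sub_inv S kH.
have th m : m \in H -> tilde H * m = tilde H := tilde_mulr S.
have uH : h * k' \in H := HM _ _ hH k'H.
set u := h * k' in uH *.
have Eu : psixH x H u = 1.
  by rewrite /u psixH_mul ?th // E -psixH_mul ?th // kk' psixH1.
have uf : u * (1 - u) = 1 - u.
  have E2 : (1 - u) * x * tilde H = 1 - u by rewrite -{2}Eu /psixH [u + _]addrC addrK.
  have -> : u * (1 - u) = (1 - u) * u by rewrite mulrBr mulrBl mulr1 mul1r.
  by rewrite -{1}E2 -!mulrA (th u uH) mulrA E2.
have u1 := unip_one S uH uf.
by rewrite -[h]mulr1 -k'k mulrA -/u u1 mul1r.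
Qed.

Lemma inR_sum (F : fieldExtType rat) (R : pred F) (I : eqType) (r : seq I) (f : I -> F) :
  1 \in R -> {in R &, forall x y, x - y \in R} ->
  (forall i, i \in r -> f i \in R) -> \sum_(i <- r) f i \in R.
Proof.
move=> R1 RB; have R0 : 0 \in R by rewrite -(subrr 1) RB.
have RD : {in R &, forall x y, x + y \in R}.
  move=> a b aR bR; have -> : a + b = a - (0 - b) by rewrite sub0r opprK.
  by rewrite RB // RB.
elim: r => [|a r IH] fr; first by rewrite big_nil.
rewrite big_cons RD ?fr ?mem_head // IH // => i ir; apply: fr; by rewrite in_cons ir orbT.
Qed.

Lemma inG1 (F : fieldExtType rat) (R : pred F) (gT : finGroupType) :
  1 \in R -> {in R &, forall x y, x - y \in R} -> (1 : galg F gT) \in in_galg R.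
Proof.
move=> R1 RB; apply/forallP => g; rewrite ffunE.
case: (g == 1%g).
  by rewrite /= mulr1n.
have R0 : (0 : F) \in R by have := RB 1 1 R1 R1; rewrite subrr.
exact: R0.
Qed.

Lemma inGB (F : fieldExtType rat) (R : pred F) (gT : finGroupType) (u v : galg F gT) :
  {in R &, forall x y, x - y \in R} ->
  u \in in_galg R -> v \in in_galg R -> u - v \in in_galg R.
Proof.
move=> RB /forallP uR /forallP vR; apply/forallP => g; rewrite !ffunE; exact: RB.
Qed.

Lemma inGD (F : fieldExtType rat) (R : pred F) (gT : finGroupType) (u v : galg F gT) :
  1 \in R -> {in R &, forall x y, x - y \in R} ->
  u \in in_galg R -> v \in in_galg R -> u + v \in in_galg R.
Proof.
move=> R1 RB uR vR; have -> : u + v = u - (0 - v) by rewrite sub0r opprK.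
by rewrite inGB // inGB // -(subrr u) inGB.
Qed.

Lemma inGM (F : fieldExtType rat) (R : pred F) (gT : finGroupType) (u v : galg F gT) :
  1 \in R -> {in R &, forall x y, x - y \in R} -> {in R &, forall x y, x * y \in R} ->
  u \in in_galg R -> v \in in_galg R -> u * v \in in_galg R.
Proof.
move=> R1 RB RM /forallP uR /forallP vR; apply/forallP => g; rewrite ffunE.
by apply: inR_sum => // h _; apply: RM.
Qed.

Lemma inGsum (F : fieldExtType rat) (R : pred F) (gT : finGroupType) (H : seq (galg F gT)) :
  1 \in R -> {in R &, forall x y, x - y \in R} ->
  {in H, forall h, h \in in_galg R} -> tilde H \in in_galg R.
Proof.
move=> R1 RB HR; apply/forallP => g; rewrite /tilde sum_ffunE.
by apply: inR_sum => // h /HR /forallP /(_ g).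
Qed.

Lemma exists_c (F : fieldExtType rat) (gT : finGroupType) n :
  (0 < n)%N -> exists c : galg F gT, c *+ n = 1.
Proof.
move=> n0; exists [ffun g => (g == 1%g)%:R * (n%:R)^-1]; apply/ffunP => g.
rewrite ffunMnE !ffunE -mulrnAr -[(n%:R)^-1 *+ n]mulr_natr mulVf ?natF_neq0 // mulr1.
by [].
Qed.

Lemma conj_psiHx (F : fieldExtType rat) (gT : finGroupType) P (H : seq (galg F gT)) x :
  is_finite_subgroup P H ->
  exists p q, [/\ p * q = 1, q * p = 1 & {in H, forall h, psiHx H x h = p * h * q}].
Proof.
move=> S; have [uniqH _ oneH HM _] := S.
have n0 : (0 < size H)%N by case: (H) oneH.
have [c cn] := exists_c F gT n0.
set t := tilde H; set e := c * t; set b := t * x * (1 - e).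
have eh h : h \in H -> e * h = e by move=> hH; rewrite /e -mulrA (tilde_mulr S hH).
have et : e * t = t by rewrite /e -mulrA (tilde_sq S) mulrnAr -mulrnAl cn mul1r.
have ft : (1 - e) * t = 0 by rewrite mulrBl mul1r et subrr.
have bb : b * b = 0.
  by rewrite /b !mulrA -[t * x * (1 - e) * t]mulrA ft mulr0 !mul0r.
have hb h : h \in H -> h * b = b by move=> hH; rewrite /b !mulrA (tilde_mull S hH).
have Ebh h : h \in H -> b * (1 - h) = t * x * (1 - h).
  move=> hH; rewrite /b -mulrA; congr (_ * _).
  by rewrite mulrBl mul1r [e * _]mulrBr mulr1 eh // subrr subr0.
have pb h : h \in H -> psiHx H x h * b = b.
  move=> hH; rewrite /psiHx mulrDl hb // -mulrA [(1 - h) * b]mulrBl mul1r hb //.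
  by rewrite subrr mulr0 addr0.
have key h : h \in H -> (1 - b) * h = psiHx H x h * (1 - b).
  move=> hH; rewrite mulrBl mul1r mulrBr mulr1 pb // /psiHx -/t -(Ebh h hH).
  by rewrite mulrBr mulr1 addrA addrAC addrK.
have bq : (1 - b) * (1 + b) = 1.
  by rewrite mulrBl mul1r mulrDr mulr1 bb addr0 addrK.
have qb : (1 + b) * (1 - b) = 1.
  by rewrite mulrDl mul1r mulrBr mulr1 bb subr0 subrK.
exists (1 - b), (1 + b); split => // h hH.
by rewrite key // -mulrA bq mulr1.
Qed.

Lemma conj_psixH (F : fieldExtType rat) (gT : finGroupType) P (H : seq (galg F gT)) x :
  is_finite_subgroup P H ->
  exists p q, [/\ p * q = 1, q * p = 1 & {in H, forall h, psixH x H h = p * h * q}].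
Proof.
move=> S; have [uniqH _ oneH HM _] := S.
have n0 : (0 < size H)%N by case: (H) oneH.
have [c cn] := exists_c F gT n0.
set t := tilde H; set e := t * c; set b := (1 - e) * x * t.
have he h : h \in H -> h * e = e by move=> hH; rewrite /e mulrA (tilde_mull S hH).
have te : t * e = t by rewrite /e mulrA (tilde_sq S) mulrnAl -mulrnAr cn mulr1.
have tf : t * (1 - e) = 0 by rewrite mulrBr mulr1 te subrr.
have bb : b * b = 0.
  by rewrite /b !mulrA -[(1 - e) * x * t * (1 - e)]mulrA tf mulr0 !mul0r.
have bh h : h \in H -> b * h = b by move=> hH; rewrite /b -mulrA (tilde_mulr S hH).
have Ebh h : h \in H -> (1 - h) * b = (1 - h) * x * t.
  move=> hH; rewrite /b !mulrA; congr (_ * _ * _).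
  by rewrite mulrBr mulr1 [_ * e]mulrBl mul1r he // subrr subr0.
have pb h : h \in H -> b * psixH x H h = b.
  move=> hH; rewrite /psixH mulrDr bh // !mulrA [b * (1 - h)]mulrBr mulr1 bh //.
  by rewrite subrr !mul0r addr0.
have key h : h \in H -> h * (1 - b) = (1 - b) * psixH x H h.
  move=> hH; rewrite mulrBr mulr1 mulrBl mul1r pb // /psixH -/t -(Ebh h hH).
  by rewrite mulrBl mul1r addrA addrAC addrK.
have bq : (1 - b) * (1 + b) = 1.
  by rewrite mulrBl mul1r mulrDr mulr1 bb addr0 addrK.
have qb : (1 + b) * (1 - b) = 1.
  by rewrite mulrDl mul1r mulrBr mulr1 bb subr0 subrK.
exists (1 + b), (1 - b); split => // h hH.
by rewrite -mulrA key // mulrA qb mul1r.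
Qed.

Lemma gelt_mul (F : fieldExtType rat) (gT : finGroupType) (a b : gT) :
  gelt F a * gelt F b = gelt F (a * b)%g.
Proof.
apply/ffunP => p; rewrite !ffunE (bigD1 a) //= big1 => [|h /negbTE nh]; last first.
  by rewrite ffunE nh mul0r.
rewrite !ffunE eqxx mul1r addr0; congr (nat_of_bool _ )%:R.
by apply/eqP/eqP => [<-|->]; rewrite ?mulKVg ?mulKg.
Qed.

Lemma gelt_inj (F : fieldExtType rat) (gT : finGroupType) : injective (gelt F (gT:=gT)).
Proof.
move=> a b /ffunP /(_ a); rewrite !ffunE eqxx.
by case: eqP => // _ /eqP; rewrite oner_eq0.
Qed.

Lemma tgelt_coef (F : fieldExtType rat) (gT : finGroupType) (K : {group gT}) (a p : gT) :
  ((\sum_(k <- enum K) gelt F k) * gelt F a) p = \sum_(k <- enum K) (p == k * a)%g%:R.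
Proof.
rewrite mulr_suml sum_ffunE; apply: eq_bigr => k _; by rewrite gelt_mul ffunE.
Qed.

Lemma part3 (F : fieldExtType rat) (gT : finGroupType) P (H : seq (galg F gT)) :
  is_finite_subgroup P H ->
  forall (K : {group gT}), H =i [seq gelt F k | k <- enum K] ->
      forall g : gT,
        {in (K :&: K :^ g)%g, forall k,
           psiHx H (gelt F g) (gelt F k) = gelt F k /\
           psixH (gelt F (g^-1)%g) H (gelt F k) = gelt F k} /\
        (forall y : galg F gT,
           (y \in [seq psiHx H (gelt F g) h | h <- H]) &&
           (y \in [seq psixH (gelt F (g^-1)%g) H h | h <- H])
           = (y \in [seq gelt F k | k <- enum ((K :&: K :^ g)%g)])).
Proof.
move=> S K HK g; have [uniqH _ oneH HM _] := S.
have n0 : (0 < size H)%N by case: (H) oneH.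
have u2 : uniq [seq gelt F k | k <- enum K].
  by rewrite map_inj_uniq ?enum_uniq //; exact: gelt_inj.
have tE : tilde H = \sum_(k <- enum K) gelt F k.
  by rewrite /tilde (perm_big _ (uniq_perm uniqH u2 HK)) big_map.
have gK k : k \in K -> gelt F k \in H by move=> kK; rewrite HK map_f // mem_enum.
have p1 : {in (K :&: K :^ g)%g, forall k,
           psiHx H (gelt F g) (gelt F k) = gelt F k /\
           psixH (gelt F (g^-1)%g) H (gelt F k) = gelt F k}.
  move=> k /setIP [kK]; rewrite mem_conjg conjgE invgK mulgA => k'K.
  split.
    rewrite /psiHx mulrBr mulr1 -mulrA gelt_mul.
    have -> : (g * k = (g * k * g^-1) * g)%g by rewrite mulgKV.
    by rewrite -gelt_mul mulrA (tilde_mulr S (gK _ k'K)) subrr addr0.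
  rewrite /psixH mulrBl mul1r gelt_mul.
  have -> : (k * g^-1 = g^-1 * (g * k * g^-1))%g by rewrite !mulgA mulVg mul1g.
  by rewrite -gelt_mul mulrBl -mulrA (tilde_mull S (gK _ k'K)) subrr addr0.
split => // y; apply/idP/idP.
  case/andP => /mapP [h1 h1H ->] /mapP [h2 h2H E2].
  have : tilde H * psiHx H (gelt F g) h1 = tilde H.
    by rewrite E2 psixH_tl ?(tilde_mull S h2H) ?(tilde_mulr S h2H).
  rewrite psiHx_tl ?(tilde_mulr S h1H) ?(tilde_sq S) // => E.
  have z0 : tilde H * gelt F g * (1 - h1) = 0.
    apply: (char0_galg n0); apply: (@addrI _ (tilde H)); by rewrite E addr0.
  have -> : psiHx H (gelt F g) h1 = h1 by rewrite /psiHx z0 addr0.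
  move: h1H z0; rewrite HK => /mapP [k]; rewrite mem_enum => kK ->.
  rewrite mulrBr mulr1 -mulrA gelt_mul => /eqP; rewrite subr_eq0 => /eqP E3.
  have k'K : (g * k * g^-1 \in K)%g.
    apply/negPn/negP => nK.
    have L0 : \sum_(k2 <- enum K) ((g * k)%g == (k2 * g)%g)%:R = 0 :> F.
      apply: big1_seq => k2 /andP [_]; rewrite mem_enum => k2K.
      case: eqP => // E4; case/negP: nK; by rewrite E4 mulgK.
    have R1 : \sum_(k2 <- enum K) ((g * k)%g == (k2 * (g * k))%g)%:R = 1 :> F.
      rewrite (bigD1_seq 1%g) ?mem_enum ?enum_uniq //= mul1g eqxx big1_seq ?addr0 //.
      move=> k2 /andP [n1 _]; case: eqP => // E4; case/negP: n1.
      by apply/eqP; apply: (mulIg (g * k)%g); rewrite mul1g -E4.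
    move/ffunP: E3 => /(_ (g * k)%g); rewrite tE !tgelt_coef L0 R1 => /eqP.
    by rewrite eq_sym oner_eq0.
  rewrite map_f // mem_enum; apply/setIP; split => //; by rewrite mem_conjg conjgE invgK mulgA.
case/mapP => k; rewrite mem_enum => kI ->; have [E1 E2] := p1 k kI.
move/setIP: kI => [kK _].
by apply/andP; split; apply/mapP; exists (gelt F k); rewrite ?gK ?E1 ?E2.
Qed.

Theorem proposition6p2 (F : fieldExtType rat) (R : pred F) (gT : finGroupType)
    (H : seq (galg F gT)) (x : galg F gT) :
  is_order R ->
  is_finite_subgroup (V_galg R) H ->
  x \in in_galg R ->
  [/\ (* (i) *)
      [/\ {in H &, forall h k, psiHx H x (h * k) = psiHx H x h * psiHx H x k},
          {in H &, injective (psiHx H x)} &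
          {in H, forall h, unit_in (in_galg R) (psiHx H x h)}],
      [/\ {in H &, forall h k, psixH x H (h * k) = psixH x H h * psixH x H k},
          {in H &, injective (psixH x H)} &
          {in H, forall h, unit_in (in_galg R) (psixH x H h)}],
      (* (ii) *)
      [/\ conjugate_in (unit_in predT) H [seq psiHx H x h | h <- H],
          conjugate_in (unit_in predT) H [seq psixH x H h | h <- H] &
          conjugate_in (unit_in predT) [seq psiHx H x h | h <- H]
                                       [seq psixH x H h | h <- H]] &
      (* (iii) *)
      forall (K : {group gT}), H =i [seq gelt F k | k <- enum K] ->
      forall g : gT,
        {in (K :&: K :^ g)%g, forall k,
           psiHx H (gelt F g) (gelt F k) = gelt F k /\
           psixH (gelt F (g^-1)%g) H (gelt F k) = gelt F k} /\
        (forall y : galg F gT,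
           (y \in [seq psiHx H (gelt F g) h | h <- H]) &&
           (y \in [seq psixH (gelt F (g^-1)%g) H h | h <- H])
           = (y \in [seq gelt F k | k <- enum ((K :&: K :^ g)%g)]))].
Proof.
move=> [R1 RB RM _] S xR.
have [uniqH HP oneH HM _] := S.
have hR h : h \in H -> h \in in_galg R by move=> hH; have [[]] := HP h hH.
have tR : tilde H \in in_galg R by apply: inGsum.
have oneR : (1 : galg F gT) \in in_galg R by apply: inG1.
split; last exact: (part3 S).
- split.
  + by move=> h k hH kH; apply: psiHx_mul; apply: (tilde_mull S hH).
  + exact: psiHx_inj S.
  + move=> h hH; have [k kH [hk kh]] := sub_inv S hH.
    have pR m : m \in H -> psiHx H x m \in in_galg R.
      move=> mH; rewrite /psiHx; apply: inGD => //; first exact: hR.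
      apply: inGM => //; first exact: inGM.
      by apply: inGB => //; exact: hR.
    split; first exact: pR.
    exists (psiHx H x k); first exact: pR.
    by rewrite -!psiHx_mul ?(tilde_mull S hH) ?(tilde_mull S kH) // hk kh psiHx1.
- split.
  + by move=> h k hH kH; apply: psixH_mul; apply: (tilde_mulr S kH).
  + exact: psixH_inj S.
  + move=> h hH; have [k kH [hk kh]] := sub_inv S hH.
    have pR m : m \in H -> psixH x H m \in in_galg R.
      move=> mH; rewrite /psixH; apply: inGD => //; first exact: hR.
      apply: inGM => //.
      apply: inGM => //; by apply: inGB => //; exact: hR.
    split; first exact: pR.
    exists (psixH x H k); first exact: pR.
    by rewrite -!psixH_mul ?(tilde_mulr S hH) ?(tilde_mulr S kH) // hk kh psixH1.
- have [p [q [pq qp Ep]]] := conj_psiHx x S.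
  have [p' [q' [pq' qp' Ep']]] := conj_psixH x S.
  split.
  + exists q, p; split => //; first by split => //; exists p.
    by move=> y; congr (y \in _); apply/eq_in_map => h hH; rewrite Ep.
  + exists q', p'; split => //; first by split => //; exists p'.
    by move=> y; congr (y \in _); apply/eq_in_map => h hH; rewrite Ep'.
  + exists (p * q'), (p' * q); split.
    * split => //; exists (p' * q) => //.
      by rewrite !mulrA -[p * q' * p']mulrA qp' mulr1 pq -[p' * q * p]mulrA qp mulr1 pq'.
    * by rewrite !mulrA -[p * q' * p']mulrA qp' mulr1 pq.
    * by rewrite !mulrA -[p' * q * p]mulrA qp mulr1 pq'.
    move=> y; congr (y \in _); rewrite -map_comp; apply/eq_in_map => h hH /=.
    rewrite Ep // Ep' // !mulrA -[p' * q * p]mulrA qp mulr1.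
    by rewrite -[p' * h * q * p]mulrA qp mulr1.
Qed.
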